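(* Let $\mathrm{M}$ be a simple matroid of rank at least $3$ on ground set $E$, and let $i\in E$ be an element that is not a coloop such that the deletion $\mathrm{M}\setminus\{i\}$ is a Boolean matroid. Then there exists a rank-$1$ flat $F$ of $\mathrm{M}$ with $F\in\underline{S}_i$.
   Context: $\underline{S}_i$ is the family of flats $F$ of $\mathrm{M}$ such that $\varnothing\subsetneq F\subsetneq E\setminus\{i\}$ and $F\cup\{i\}$ is a flat. A Boolean matroid is one in which every subset of the ground set is independent. *)

(* Defs.v *)
From mathcomp Require Import all_boot.
Set Implicit Arguments. Unset Strict Implicit. Unset Printing Implicit Defensive.

Section Matroid.
Variable T : finType.

(* A matroid on ground set E = T is given by its family of independent sets. *)
Definition is_matroid (indep : {set T} -> bool) : Prop :=
  [/\ indep set0,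
      (forall A B : {set T}, A \subset B -> indep B -> indep A) &
      (forall A B : {set T}, indep A -> indep B -> #|A| < #|B| ->
         exists2 x, x \in B :\: A & indep (x |: A))].

Variable indep : {set T} -> bool.

Definition mrank (A : {set T}) : nat :=
  \max_(B in powerset A | indep B) #|B|.

Definition is_basis (B : {set T}) : bool :=
  indep B && [forall x, (x \notin B) ==> ~~ indep (x |: B)].

Definition is_flat (F : {set T}) : bool :=
  [forall x, (x \notin F) ==> (mrank F < mrank (x |: F))].

Definition simple_matroid : bool :=
  [forall x, indep [set x]] && [forall x, forall y, (x != y) ==> indep [set x; y]].

Definition is_coloop (i : T) : bool := [forall B, is_basis B ==> (i \in B)].

(* deletion M \ {i}: ground set E \ {i}, independent sets = independent sets
   of M contained in E \ {i}.  It is Boolean iff all its subsets are independent. *)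
Definition deletion_boolean (i : T) : bool :=
  [forall A : {set T}, (A \subset [set~ i]) ==> indep A].

Definition in_S (i : T) (F : {set T}) : bool :=
  [&& is_flat F, set0 \proper F, F \proper [set~ i] & is_flat (i |: F)].

End Matroid.

(* Main.v *)
Require Import Defs.
From mathcomp Require Import all_boot zify.

Section Aux.
Variable T : finType.
Variable indep : {set T} -> bool.
Hypothesis Hm : is_matroid indep.

Lemma mrank_indep A : indep A -> mrank indep A = #|A|.
Proof.
move=> iA; apply/eqP; rewrite eqn_leq; apply/andP; split.
  apply/bigmax_leqP => B /andP[]; rewrite powersetE => sBA _.
  exact: subset_leq_card.
by apply: (leq_bigmax_cond (P := fun B => (B \in powerset A) && indep B));
  rewrite powersetE subxx iA.
Qed.

Lemma aug_iter n : forall A B, indep A -> indep B -> #|A| + n = #|B| ->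
  exists A', [/\ indep A', A \subset A', A' \subset A :|: B & #|A'| = #|B|].
Proof.
case: Hm => _ _ Haug.
elim: n => [|n IH] A B iA iB e.
  exists A; split => //; [exact: subsetUl | by rewrite -e addn0].
have lAB : #|A| < #|B| by rewrite -e addnS ltnS leq_addr.
have [x /setDP[xB xA] ixA] := Haug A B iA iB lAB.
have ec : #|x |: A| + n = #|B| by rewrite cardsU1 xA add1n addSn -addnS.
have [A' [i1 i2 i3 i4]] := IH (x |: A) B ixA iB ec.
exists A'; split => //.
  exact: subset_trans (subsetUr _ _) i2.
apply: subset_trans i3 _; apply/subsetP => z; rewrite !inE.
by case/orP => [/orP[/eqP->|->]|->]; rewrite ?xB ?orbT.
Qed.

Lemma circ_inter (i : T) (I J : {set T}) :
  indep (I :|: J) -> i \notin I :|: J -> ~~ indep (i |: I) -> ~~ indep (i |: J) ->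
  ~~ indep (i |: (I :&: J)).
Proof.
move=> iIJ niIJ dI dJ; apply/negP => iK.
case: Hm => _ Hsub _.
have [eIJ|nIJ] := eqVneq I J.
  by subst J; rewrite setIid in iK; rewrite iK in dI.
have lt : #|I :&: J| < #|I :|: J|.
  rewrite ltn_neqAle subset_leq_card ?andbT; last first.
    exact: subset_trans (subsetIl _ _) (subsetUl _ _).
  apply/negP => /eqP ec.
  have : I :&: J == I :|: J.
    by rewrite eqEcard ec leqnn andbT (subset_trans (subsetIl _ _) (subsetUl _ _)).
  move/eqP => h; move/negP: nIJ; apply; rewrite eqEsubset; apply/andP; split;
    apply/subsetP => z zI.
    have : z \in I :&: J by rewrite h !inE zI.
    by rewrite inE => /andP[].
  have : z \in I :&: J by rewrite h !inE zI orbT.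
  by rewrite inE => /andP[].
have niK : i \notin I :&: J.
  by apply: contra niIJ; rewrite !inE => /andP[->].
have ec : #|i |: (I :&: J)| + (#|I :|: J| - #|I :&: J| - 1) = #|I :|: J|.
  by rewrite cardsU1 niK; lia.
have [K' [iK' sK sK' cK']] := aug_iter _ _ _ iK iIJ ec.
have iinK : i \in K' by apply: (subsetP sK); rewrite !inE eqxx.
have [sI|/subsetPn [e1 e1I e1K]] := boolP (I \subset K').
  by move: dI; rewrite (Hsub _ _ _ iK') // subUset sub1set iinK sI.
have [sJ|/subsetPn [e2 e2J e2K]] := boolP (J \subset K').
  by move: dJ; rewrite (Hsub _ _ _ iK') // subUset sub1set iinK sJ.
have e1J : e1 \notin J.
  by apply: contra e1K => e1J; apply: (subsetP sK); rewrite !inE e1I e1J orbT.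
have ne : e1 != e2 by apply: contraNneq e1J => ->.
have disj : K' :&: [set e1; e2] = set0.
  apply/setP => z; rewrite !inE; apply/negP => /andP[zK /orP[] /eqP ez];
  by move: zK; rewrite ez ?(negbTE e1K) ?(negbTE e2K).
have sub : K' :|: [set e1; e2] \subset i |: (I :|: J).
  rewrite subUset; apply/andP; split.
    apply: subset_trans sK' _; rewrite subUset; apply/andP; split; last exact: subsetUr.
    by apply: setUS; apply: subset_trans (subsetIl _ _) (subsetUl _ _).
  by rewrite subUset !sub1set !inE e1I e2J !orbT.
have := subset_leq_card sub.
rewrite cardsU disj cards0 subn0 cards2 ne cardsU1 niIJ cK'.
by rewrite /= addnC leq_add2r.
Qed.
End Aux.

Arguments mrank_indep {T indep A}.
Arguments circ_inter {T indep} Hm {i I J}.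

Theorem lemma3p5 (T : finType) (indep : {set T} -> bool) (i : T) :
  is_matroid indep ->
  simple_matroid indep ->
  3 <= mrank indep [set: T] ->
  ~~ is_coloop indep i ->
  deletion_boolean indep i ->
  exists F : {set T}, [/\ is_flat indep F, mrank indep F = 1 & in_S indep i F].
Proof.
move=> Hm /andP[/forallP s1 /forallP s2] rk ncol db.
have Hm' := Hm; case: Hm' => i0 Hsub Haug.
have dbB : forall A : {set T}, A \subset [set~ i] -> indep A.
  by move=> A h; apply: (implyP (forallP db A)).
have ind2 : forall y z, y != z -> indep [set y; z].
  by move=> y z h; apply: (implyP (forallP (s2 y) z)).
have dT : ~~ indep [set: T].
  move: ncol; rewrite /is_coloop negb_forall => /existsP [Bs].
  rewrite negb_imply => /andP[/andP[iBs /forallP mx] iBs'].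
  have eB : Bs = [set~ i].
    apply/eqP; rewrite eqEsubset; apply/andP; split.
      apply/subsetP => z zB; rewrite !inE; apply/eqP => ezi.
      by move: iBs'; rewrite -ezi zB.
    apply/subsetP => z; rewrite !inE => zi; apply/negPn/negP => zB.
    have := implyP (mx z) zB; rewrite dbB //; apply/subsetP => w.
    rewrite !inE => /orP[/eqP->|wB] //.
    by apply/eqP => ewi; move: iBs'; rewrite -ewi wB.
  have <- : i |: Bs = [set: T].
    by apply/setP => z; rewrite !inE eB !inE; case: eqP.
  exact: (implyP (mx i) iBs').
have c3 : 3 <= #|[set~ i]|.
  rewrite leqNgt; apply/negP => lt3.
  move: rk; apply/negP; rewrite -ltnNge ltnS.
  apply/bigmax_leqP => C /andP[_ iC].
  rewrite leqNgt; apply/negP => gC.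
  have lt : #|[set~ i]| < #|C| by apply: leq_trans gC; rewrite ltnS -ltnS.
  have [x /setDP[xC xB] ix] := Haug _ _ (dbB _ (subxx _)) iC lt.
  move: xB; rewrite !inE negbK => /eqP exi.
  have ex : x |: [set~ i] = [set: T].
    by apply/setP=> z; rewrite !inE exi; case: eqP.
  by move: dT; rewrite -ex ix.
have [x [xi good]] : exists x, x != i /\
    forall y, y != i -> y != x -> indep (y |: (i |: [set x])).
  case: (boolP [exists a, exists b, [&& a != i, b != i & ~~ indep (i |: [set a; b])]]).
    move=> /existsP[a /existsP[b /and3P[ai bi dab]]].
    have : 0 < #|[set~ i] :\: [set a; b]|.
      have h1 := subset_leq_card (subsetIr [set~ i] [set a; b]).
      have h2 : #|[set a; b]| <= 2 by rewrite cards2; case: (a != b).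
      rewrite cardsD; lia.
    case/card_gt0P => x; rewrite !inE => /andP[/norP[xa xb] xi].
    exists x; split=> // y yi yx; apply/negPn/negP => dxy.
    have h1 : indep ([set a; b] :|: [set y; x]).
      apply: dbB; apply/subsetP => z; rewrite !inE.
      by move=> /orP[/orP[]|/orP[]] /eqP->.
    have h2 : i \notin [set a; b] :|: [set y; x].
      by rewrite !inE ![i == _]eq_sym (negbTE ai) (negbTE bi) (negbTE yi) (negbTE xi).
    have h4 : ~~ indep (i |: [set y; x]) by rewrite setUCA.
    have := circ_inter Hm h1 h2 dab h4.
    rewrite (Hsub _ [set i; y]) //; last by apply: ind2; rewrite eq_sym.
    apply/subsetP => z; rewrite !inE.
    case/orP => [->//|/andP[zab /orP[->|/eqP zx]]]; rewrite ?orbT //.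
    by move: zab; rewrite zx (negbTE xa) (negbTE xb).
  move=> /existsPn nd.
  have : 0 < #|[set~ i]| by apply: leq_trans c3.
  case/card_gt0P => x; rewrite !inE => xi.
  exists x; split => // y yi yx.
  move/existsPn: (nd y) => /(_ x); rewrite yi xi /= negbK.
  by rewrite setUCA.
have fx : is_flat indep [set x].
  apply/forallP => y; apply/implyP; rewrite inE => yx.
  by rewrite (mrank_indep (s1 x)) (mrank_indep (ind2 _ _ yx)) cards1 cards2 yx.
exists [set x]; split => //; first by rewrite (mrank_indep (s1 x)) cards1.
apply/and4P; split => //.
- by rewrite properEcard sub0set cards0 cards1.
- by rewrite properEcard sub1set !inE xi cards1 /=; apply: leq_trans c3.
apply/forallP => y; apply/implyP; rewrite !inE negb_or => /andP[yi yx].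
have ix : i != x by rewrite eq_sym.
rewrite (mrank_indep (ind2 _ _ ix)) (mrank_indep (good y yi yx)).
rewrite cards2 ix cardsU1 cardsU1 !inE negb_or yi yx (negbTE ix).
by rewrite cards1.
Qed.
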